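(* Let $\mathcal{P}$ be a class of Banach spaces containing all finite-dimensional Banach spaces, and let $\{S_n\}_{n=1}^\infty$ be a sequence of finite metric spaces which is a set of test-spaces for $\mathcal{P}$. (i) If each $S_n$ is (the vertex set of) a connected unweighted graph with its shortest path metric, then there is a connected unweighted graph $S$ (with its shortest path metric) which is a test-space for $\mathcal{P}$. (ii) If each $S_n$ is a tree with its shortest path metric, then $S$ can be chosen to be a tree. (iii) If the $S_n$ are graphs with uniformly bounded degrees, then $S$ can be chosen to be a graph with bounded degrees.
   Context: A set $\{T_\alpha\}_{\alpha\in A}$ of metric spaces is a set of test-spaces for a class $\mathcal{P}$ of Banach spaces if for every Banach space $X$: $X\notin\mathcal{P}$ if and only if the spaces $T_\alpha$ admit bilipschitz embeddings into $X$ with uniformly bounded distortions (distortion of $f$ being $\mathrm{Lip}(f)\cdot\mathrm{Lip}(f^{-1})$). A single space $S$ is a test-space if $\{S\}$ is a set of test-spaces. Graphs are regarded as metric spaces on their vertex sets with the shortest path metric. *)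

(* Defs.v *)
From Stdlib Require Import Reals List.
Import ListNotations.
Open Scope R_scope.

Record BanachSpace := {
  bs_car :> Type;
  bs_zero : bs_car;
  bs_add : bs_car -> bs_car -> bs_car;
  bs_opp : bs_car -> bs_car;
  bs_scal : R -> bs_car -> bs_car;
  bs_norm : bs_car -> R;
  bs_addA : forall x y z, bs_add x (bs_add y z) = bs_add (bs_add x y) z;
  bs_addC : forall x y, bs_add x y = bs_add y x;
  bs_add0 : forall x, bs_add x bs_zero = x;
  bs_addN : forall x, bs_add x (bs_opp x) = bs_zero;
  bs_scalA : forall a b x, bs_scal a (bs_scal b x) = bs_scal (a * b) x;
  bs_scal1 : forall x, bs_scal 1 x = x;
  bs_scalDr : forall a x y, bs_scal a (bs_add x y) = bs_add (bs_scal a x) (bs_scal a y);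
  bs_scalDl : forall a b x, bs_scal (a + b) x = bs_add (bs_scal a x) (bs_scal b x);
  bs_norm_ge0 : forall x, 0 <= bs_norm x;
  bs_norm_eq0 : forall x, bs_norm x = 0 -> x = bs_zero;
  bs_normZ : forall a x, bs_norm (bs_scal a x) = Rabs a * bs_norm x;
  bs_normD : forall x y, bs_norm (bs_add x y) <= bs_norm x + bs_norm y;
  bs_complete : forall u : nat -> bs_car,
    (forall eps, 0 < eps -> exists N, forall m n, (N <= m)%nat -> (N <= n)%nat ->
        bs_norm (bs_add (u m) (bs_opp (u n))) < eps) ->
    exists l, forall eps, 0 < eps -> exists N, forall n, (N <= n)%nat ->
        bs_norm (bs_add (u n) (bs_opp l)) < eps
}.

Definition bs_dist (X : BanachSpace) (x y : X) : R :=
  bs_norm X (bs_add X x (bs_opp X y)).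

(** linear combination sum_i c_i b_i (lists truncated to common length) *)
Fixpoint lin_comb (X : BanachSpace) (c : list R) (b : list X) : X :=
  match c, b with
  | a :: c', v :: b' => bs_add X (bs_scal X a v) (lin_comb X c' b')
  | _, _ => bs_zero X
  end.

Definition finite_dimensional (X : BanachSpace) : Prop :=
  exists b : list X, forall x : X, exists c : list R, x = lin_comb X c b.

Record MetricSpace := {
  ms_car :> Type;
  ms_dist : ms_car -> ms_car -> R;
  ms_dist_ge0 : forall x y, 0 <= ms_dist x y;
  ms_dist_eq0 : forall x y, ms_dist x y = 0 <-> x = y;
  ms_dist_sym : forall x y, ms_dist x y = ms_dist y x;
  ms_dist_tri : forall x y z, ms_dist x z <= ms_dist x y + ms_dist y z
}.

Definition finite_metric (M : MetricSpace) : Prop :=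
  exists l : list M, forall x : M, In x l.

Definition lipschitz_with (T : MetricSpace) (X : BanachSpace) (f : T -> X) (L : R) :=
  0 <= L /\ forall x y : T, bs_dist X (f x) (f y) <= L * ms_dist T x y.

Definition inv_lipschitz_with (T : MetricSpace) (X : BanachSpace) (f : T -> X) (L : R) :=
  0 <= L /\ forall x y : T, ms_dist T x y <= L * bs_dist X (f x) (f y).

(** f is a bilipschitz embedding with distortion Lip(f) * Lip(f^{-1}) <= C
    (Lipschitz constants are attained, so this is equivalent to the
    existence of Lipschitz constants L1, L2 of f, f^{-1} with L1*L2 <= C). *)
Definition distortion_le (T : MetricSpace) (X : BanachSpace) (f : T -> X) (C : R) :=
  exists L1 L2, lipschitz_with T X f L1 /\ inv_lipschitz_with T X f L2 /\ L1 * L2 <= C.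

Definition test_spaces (P : BanachSpace -> Prop) {A : Type} (T : A -> MetricSpace) : Prop :=
  forall X : BanachSpace,
    ~ P X <-> exists C : R, forall a : A, exists f : T a -> X, distortion_le (T a) X f C.

Definition test_space (P : BanachSpace -> Prop) (S : MetricSpace) : Prop :=
  test_spaces P (fun _ : unit => S).

Inductive walk {V : Type} (adj : V -> V -> Prop) : V -> V -> nat -> Prop :=
| walk_nil : forall x, walk adj x x 0
| walk_cons : forall x y z n, adj x y -> walk adj y z n -> walk adj x z (S n).

(** M is the vertex set of the (simple, unweighted) graph adj, and the
    metric of M is the shortest path metric; this forces connectedness. *)
Definition graph_metric (M : MetricSpace) (adj : M -> M -> Prop) : Prop :=
  (forall x y, adj x y -> adj y x) /\
  (forall x, ~ adj x x) /\
  (forall x y : M, exists n : nat,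
      ms_dist M x y = INR n /\ walk adj x y n /\
      forall m, walk adj x y m -> (n <= m)%nat).

Fixpoint chain {V : Type} (adj : V -> V -> Prop) (l : list V) : Prop :=
  match l with
  | x :: ((y :: _) as l') => adj x y /\ chain adj l'
  | _ => True
  end.

Definition is_cycle {V : Type} (adj : V -> V -> Prop) (l : list V) : Prop :=
  match l with
  | [] => False
  | v0 :: _ => NoDup l /\ (3 <= length l)%nat /\ chain adj l /\ adj (last l v0) v0
  end.

Definition acyclic {V : Type} (adj : V -> V -> Prop) : Prop :=
  forall l : list V, ~ is_cycle adj l.

Definition tree_metric (M : MetricSpace) (adj : M -> M -> Prop) : Prop :=
  graph_metric M adj /\ acyclic adj.

Definition degree_le {V : Type} (adj : V -> V -> Prop) (D : nat) : Prop :=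
  forall x : V, exists l : list V, (length l <= D)%nat /\ forall y, adj x y -> In y l.

(* Main.v *)
Require Import Defs.
From Stdlib Require Import Reals Lra Lia List Permutation Classical ClassicalEpsilon ProofIrrelevance Eqdep_dec Bool Wf_nat.
Import ListNotations.

Open Scope R_scope.
Import ListNotations.
Open Scope R_scope.

Section Alg.
Variable X : BanachSpace.
Notation "x + y" := (bs_add X x y).
Notation "0" := (bs_zero X).
Notation "- x" := (bs_opp X x).
Notation "a ** x" := (bs_scal X a x) (at level 40).
Local Open Scope R_scope.

Lemma add0l x : bs_add X (bs_zero X) x = x.
Proof. rewrite bs_addC. apply bs_add0. Qed.

Lemma add_cancel x y z : bs_add X x y = bs_add X x z -> y = z.
Proof.
  intro H. rewrite <- (add0l y), <- (add0l z).
  rewrite <- (bs_addN X x), (bs_addC X x).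
  rewrite <- !bs_addA. rewrite H. reflexivity.
Qed.

Lemma scal0l x : bs_scal X 0%R x = bs_zero X.
Proof.
  apply (add_cancel (bs_scal X 0%R x)).
  rewrite bs_add0, <- bs_scalDl. f_equal. ring.
Qed.

Lemma scal0r a : bs_scal X a (bs_zero X) = bs_zero X.
Proof.
  apply (add_cancel (bs_scal X a (bs_zero X))).
  rewrite bs_add0, <- bs_scalDr, bs_add0. reflexivity.
Qed.

Lemma oppE x : bs_opp X x = bs_scal X (-1) x.
Proof.
  apply (add_cancel x). rewrite bs_addN.
  rewrite <- (bs_scal1 X x) at 1. rewrite <- bs_scalDl.
  replace (1 + -1) with 0%R by ring. rewrite scal0l. reflexivity.
Qed.

Lemma add4 a b c d : bs_add X (bs_add X a b) (bs_add X c d) = bs_add X (bs_add X a c) (bs_add X b d).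
Proof.
  rewrite !bs_addA. f_equal. rewrite <- !bs_addA. f_equal. apply bs_addC.
Qed.

Inductive vexp := VAt (i : nat) | VZ | VAdd (a b : vexp) | VOpp (a : vexp) | VScal (r : R) (a : vexp).

Fixpoint ev (env : list X) (e : vexp) : X :=
  match e with
  | VAt i => nth i env (bs_zero X)
  | VZ => bs_zero X
  | VAdd a b => bs_add X (ev env a) (ev env b)
  | VOpp a => bs_opp X (ev env a)
  | VScal r a => bs_scal X r (ev env a)
  end.

Fixpoint coef (e : vexp) (i : nat) : R :=
  match e with
  | VAt j => if Nat.eqb i j then 1 else 0
  | VZ => 0
  | VAdd a b => coef a i + coef b i
  | VOpp a => - coef a i
  | VScal r a => r * coef a i
  end.

Fixpoint sv (l : list X) (f : nat -> R) : X :=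
  match l with
  | [] => bs_zero X
  | x :: l' => bs_add X (bs_scal X (f O) x) (sv l' (fun i => f (S i)))
  end.

Lemma sv_ext l : forall f g, (forall i, (i < length l)%nat -> f i = g i) -> sv l f = sv l g.
Proof.
  induction l as [|x l IH]; intros f g H; simpl; auto.
  rewrite (H O) by (simpl; lia). f_equal. apply IH. intros i Hi; apply H; simpl; lia.
Qed.

Lemma sv_add l : forall f g, sv l (fun i => f i + g i) = bs_add X (sv l f) (sv l g).
Proof.
  induction l as [|x l IH]; intros f g; simpl.
  - rewrite bs_add0; auto.
  - rewrite IH, bs_scalDl. apply add4.
Qed.

Lemma sv_scal l : forall r f, sv l (fun i => r * f i) = bs_scal X r (sv l f).
Proof.
  induction l as [|x l IH]; intros r f; simpl.
  - rewrite scal0r; auto.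
  - rewrite IH, bs_scalDr, bs_scalA. auto.
Qed.

Lemma sv_delta l : forall j, sv l (fun i => if Nat.eqb i j then 1 else 0) = nth j l (bs_zero X).
Proof.
  induction l as [|x l IH]; intros j; simpl.
  - destruct j; auto.
  - destruct j as [|j]; simpl.
    + rewrite bs_scal1. rewrite (sv_ext l _ (fun i => 0 * 0)).
      * rewrite sv_scal, scal0l, bs_add0. auto.
      * intros i _. ring.
    + rewrite scal0l, add0l. apply IH.
Qed.

Lemma ev_sv env e : ev env e = sv env (coef e).
Proof.
  induction e; simpl.
  - rewrite sv_delta. auto.
  - rewrite (sv_ext env _ (fun i => 0 * 0)) by (intros; simpl; ring).
    rewrite sv_scal, scal0l. auto.
  - rewrite sv_add, IHe1, IHe2. auto.
  - rewrite oppE, IHe, <- sv_scal. apply sv_ext. intros; ring.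
  - rewrite IHe, <- sv_scal. auto.
Qed.

Lemma veq env e1 e2 : (forall i, (i < length env)%nat -> coef e1 i = coef e2 i) -> ev env e1 = ev env e2.
Proof. intros H. rewrite !ev_sv. apply sv_ext. auto. Qed.

End Alg.

Ltac lookup t env :=
  lazymatch env with
  | ?a :: ?l => lazymatch t with a => constr:(O) | _ => let k := lookup t l in constr:(S k) end
  end.

Ltac reify X env t :=
  match t with
  | bs_add X ?a ?b => let ra := reify X env a in let rb := reify X env b in constr:(VAdd ra rb)
  | bs_zero X => constr:(VZ)
  | bs_opp X ?a => let ra := reify X env a in constr:(VOpp ra)
  | bs_scal X ?r ?a => let ra := reify X env a in constr:(VScal r ra)
  | _ => let k := lookup t env in constr:(VAt k)
  end.

Ltac veqtac X env :=
  match goal with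
  | |- ?L = ?R =>
    let e1 := reify X env L in let e2 := reify X env R in
    change (ev X env e1 = ev X env e2); apply veq;
    let i := fresh "i" in let Hi := fresh "Hi" in
    intros i Hi; simpl in Hi;
    repeat (first [exfalso; lia | destruct i as [|i]; [simpl; solve [ring | field; auto]|]])
  end.


Open Scope R_scope.
Import ListNotations.
Open Scope R_scope.

Section Ban.
Variable X : BanachSpace.
Notation "x +: y" := (bs_add X x y) (at level 50, left associativity).
Notation "-: x" := (bs_opp X x) (at level 35).
Notation "a ** x" := (bs_scal X a x) (at level 40).
Notation nm := (bs_norm X).
Notation z0 := (bs_zero X).

Lemma norm0 : nm z0 = 0.
Proof. rewrite <- (scal0l X z0), bs_normZ, Rabs_R0. ring. Qed.

Lemma norm_opp x : nm (-: x) = nm x.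
Proof. rewrite oppE, bs_normZ, Rabs_left by lra. ring. Qed.

Lemma norm_sub_sym x y : nm (x +: -: y) = nm (y +: -: x).
Proof. replace (x +: -: y) with (-: (y +: -: x)) by veqtac X [x;y]. apply norm_opp. Qed.

Lemma norm_subD x y : nm (x +: -: y) <= nm x + nm y.
Proof. rewrite <- (norm_opp y). apply bs_normD. Qed.

Lemma norm_rev x y : nm x - nm y <= nm (x +: y).
Proof.
  assert (H := bs_normD X (x +: y) (-: y)). rewrite norm_opp in H.
  replace (x +: y +: -: y) with x in H by veqtac X [x;y]. lra.
Qed.

Lemma norm_eq0_iff x : nm x = 0 <-> x = z0.
Proof. split; [apply bs_norm_eq0|intros ->; apply norm0]. Qed.

Lemma dist_tri x y z : nm (x +: -: z) <= nm (x +: -: y) + nm (y +: -: z).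
Proof.
  replace (x +: -: z) with ((x +: -: y) +: (y +: -: z)) by veqtac X [x;y;z].
  apply bs_normD.
Qed.

Definition msX : MetricSpace.
Proof.
  refine {| ms_car := bs_car X; ms_dist := bs_dist X |}.
  - intros; apply bs_norm_ge0.
  - intros x y; unfold bs_dist; rewrite norm_eq0_iff; split; intro H.
    + replace x with ((x +: -: y) +: y) by veqtac X [x;y]. rewrite H. veqtac X [y].
    + subst. apply bs_addN.
  - intros; apply norm_sub_sym.
  - intros; apply dist_tri.
Defined.

Inductive spn (l : list X) : X -> Prop :=
| sp_in x : In x l -> spn l x
| sp_0 : spn l z0
| sp_add x y : spn l x -> spn l y -> spn l (x +: y)
| sp_scal a x : spn l x -> spn l (a ** x).

Lemma spn_mono l l' x : incl l l' -> spn l x -> spn l' x.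
Proof. intros Hi H; induction H; [apply sp_in; auto|apply sp_0|apply sp_add; auto|apply sp_scal; auto]. Qed.

Lemma spn_opp l x : spn l x -> spn l (-: x).
Proof. intros; rewrite oppE; apply sp_scal; auto. Qed.

Lemma spn_sub l x y : spn l x -> spn l y -> spn l (x +: -: y).
Proof. intros; apply sp_add; auto; apply spn_opp; auto. Qed.

Lemma spn_nil x : spn [] x -> x = z0.
Proof.
  intro H; induction H.
  - destruct H.
  - auto.
  - subst. veqtac X (@nil X).
  - subst. apply scal0r.
Qed.

Lemma spn_cons_inv v l x : spn (v :: l) x -> exists a z, spn l z /\ x = a ** v +: z.
Proof.
  intro H; induction H as [y Hy| |y1 y2 H1 IH1 H2 IH2|c y H1 IH1].
  - destruct Hy as [<-|Hy].
    + exists 1, z0. split; [apply sp_0|]. veqtac X [v].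
    + exists 0, y. split; [apply sp_in; auto|]. veqtac X [y;v].
  - exists 0, z0. split; [apply sp_0|]. veqtac X [v].
  - destruct IH1 as (a1 & w1 & Hw1 & ->). destruct IH2 as (a2 & w2 & Hw2 & ->).
    exists (a1 + a2), (w1 +: w2). split; [apply sp_add; auto|]. veqtac X [v;w1;w2].
  - destruct IH1 as (a1 & w1 & Hw1 & ->).
    exists (c * a1), (c ** w1). split; [apply sp_scal; auto|]. veqtac X [v;w1].
Qed.

Lemma spn_cons l v a z : spn l z -> spn (v :: l) (a ** v +: z).
Proof.
  intros. apply sp_add. apply sp_scal, sp_in; left; auto.
  apply (spn_mono l); auto. intros y Hy; right; auto.
Qed.

Lemma spn_lincomb l x : spn l x -> exists c, x = lin_comb X c l.
Proof.
  revert x; induction l as [|v l IH]; intros x H.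
  - exists []. simpl. apply spn_nil; auto.
  - destruct (spn_cons_inv v l x H) as (a & z & Hz & ->).
    destruct (IH z Hz) as (c & ->). exists (a :: c). reflexivity.
Qed.

Lemma notfd_out : ~ finite_dimensional X -> forall l, exists x, ~ spn l x.
Proof.
  intros Hfd l. apply NNPP; intro Hn. apply Hfd. exists l. intro x.
  apply spn_lincomb. apply NNPP; intro Hx. apply Hn. exists x; auto.
Qed.

Lemma inv_pos_small eps : 0 < eps -> exists N : nat, forall k, (N <= k)%nat -> / (INR k + 1) < eps.
Proof.
  intros He. destruct (INR_unbounded (/ eps)) as [N HN]. exists N. intros k Hk.
  assert (INR N <= INR k) by (apply le_INR; auto).
  assert (0 < / eps) by (apply Rinv_0_lt_compat; auto).
  rewrite <- (Rinv_inv eps). apply Rinv_lt_contravar.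
  - apply Rmult_lt_0_compat; auto. lra.
  - lra.
Qed.

Lemma closed_span l : forall x, (forall eps, 0 < eps -> exists z, spn l z /\ nm (x +: -: z) < eps) -> spn l x.
Proof.
  induction l as [|v l IH]; intros x H.
  - assert (Hx : nm x = 0).
    { apply Rle_antisym; [|apply bs_norm_ge0]. apply Rnot_lt_le; intro Hlt.
      destruct (H _ Hlt) as (z & Hz & Hn). apply spn_nil in Hz; subst.
      replace (x +: -: z0) with x in Hn by veqtac X [x]. lra. }
    apply bs_norm_eq0 in Hx; subst; apply sp_0.
  - destruct (classic (spn l v)) as [Hv|Hv].
    + apply (spn_mono l). intros y Hy; right; auto.
      apply IH. intros eps He. destruct (H eps He) as (z & Hz & Hn).
      destruct (spn_cons_inv v l z Hz) as (a & w & Hw & ->).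
      exists (a ** v +: w). split; auto. apply sp_add; auto. apply sp_scal; auto.
    + assert (Hd : exists d, 0 < d /\ forall z, spn l z -> d <= nm (v +: -: z)).
      { apply NNPP; intro Hn. apply Hv, IH. intros eps He. apply NNPP; intro Hz.
        apply Hn. exists eps; split; auto. intros z Hz'. apply Rnot_lt_le; intro Hlt.
        apply Hz. exists z; auto. }
      destruct Hd as (d & Hd0 & Hd).
      assert (KB : forall a z, spn l z -> Rabs a * d <= nm (a ** v +: z)).
      { intros a z Hz. destruct (Req_dec a 0) as [->|Ha].
        - rewrite Rabs_R0, Rmult_0_l. apply bs_norm_ge0.
        - replace (a ** v +: z) with (a ** (v +: -: ((- / a) ** z))) by veqtac X [v;z].
          rewrite bs_normZ. apply Rmult_le_compat_l; [apply Rabs_pos|].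
          apply Hd. apply sp_scal; auto. }
      assert (Hs : forall k : nat, {p : R * X | spn l (snd p) /\
                     nm (x +: -: (fst p ** v +: snd p)) < / (INR k + 1)}).
      { intro k. apply constructive_indefinite_description.
        assert (Hk : 0 < / (INR k + 1)) by (apply Rinv_0_lt_compat; pose proof (pos_INR k); lra).
        destruct (H _ Hk) as (z & Hz & Hn). destruct (spn_cons_inv v l z Hz) as (a & w & Hw & ->).
        exists (a, w). simpl; auto. }
      set (a := fun k => fst (proj1_sig (Hs k))).
      set (w := fun k => snd (proj1_sig (Hs k))).
      assert (Hw : forall k, spn l (w k)) by (intro k; unfold w; destruct (proj2_sig (Hs k)); auto).
      assert (Ha : forall k, nm (x +: -: (a k ** v +: w k)) < / (INR k + 1))
        by (intro k; unfold a, w; destruct (proj2_sig (Hs k)); auto).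
      assert (Hc : forall j k, Rabs (a j - a k) * d <= / (INR j + 1) + / (INR k + 1)).
      { intros j k. eapply Rle_trans. apply (KB _ (w j +: -: w k)). apply spn_sub; auto.
        replace ((a j - a k) ** v +: (w j +: -: w k)) with
          ((x +: -: (a k ** v +: w k)) +: -: (x +: -: (a j ** v +: w j))) by veqtac X [x;v;w j;w k].
        eapply Rle_trans. apply norm_subD. pose proof (Ha j); pose proof (Ha k); lra. }
      assert (Hcc : Cauchy_crit a).
      { intros eps He. destruct (inv_pos_small (eps * d / 2)) as [N HN].
        { apply Rmult_lt_0_compat; [apply Rmult_lt_0_compat|]; lra. }
        exists N. intros n m Hn Hm. unfold Rdist.
        specialize (Hc n m). specialize (HN n Hn) as H1. specialize (HN m Hm) as H2.
        apply (Rmult_lt_reg_r d); auto. lra. }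
      destruct (R_complete a Hcc) as [al Hal].
      replace x with (al ** v +: (x +: -: (al ** v))) by veqtac X [x;v].
      apply spn_cons. apply IH. intros eps He.
      destruct (inv_pos_small (eps / 2)) as [N1 HN1]; [lra|].
      destruct (Hal (eps / 2 / (nm v + 1))) as [N2 HN2].
      { pose proof (bs_norm_ge0 X v). apply Rdiv_lt_0_compat; lra. }
      set (k := Nat.max N1 N2).
      exists (w k). split; auto.
      replace (x +: -: (al ** v) +: -: w k) with ((x +: -: (a k ** v +: w k)) +: ((a k - al) ** v))
        by veqtac X [x;v;w k].
      eapply Rle_lt_trans. apply bs_normD. rewrite bs_normZ.
      specialize (Ha k). specialize (HN1 k ltac:(lia)). specialize (HN2 k ltac:(lia)).
      unfold Rdist in HN2. pose proof (bs_norm_ge0 X v).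
      assert (Rabs (a k - al) * nm v <= Rabs (a k - al) * (nm v + 1)) by
        (apply Rmult_le_compat_l; [apply Rabs_pos|lra]).
      assert (Rabs (a k - al) * (nm v + 1) < eps / 2).
      { apply (Rmult_lt_compat_r (nm v + 1)) in HN2; [|lra].
        unfold Rdiv in HN2. rewrite Rmult_assoc, Rinv_l in HN2 by lra. lra. }
      lra.
Qed.

Definition transv (l : list X) (u : X) := nm u = 1 /\ forall z, spn l z -> / 2 <= nm (u +: -: z).

Lemma riesz : ~ finite_dimensional X -> forall l, exists u, transv l u.
Proof.
  intros Hfd l. destruct (notfd_out Hfd l) as [x Hx].
  assert (Hd : exists d, 0 < d /\ forall z, spn l z -> d <= nm (x +: -: z)).
  { apply NNPP; intro Hn. apply Hx, closed_span. intros eps He. apply NNPP; intro Hz.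
    apply Hn. exists eps; split; auto. intros z Hz'. apply Rnot_lt_le; intro Hlt.
    apply Hz. exists z; auto. }
  destruct Hd as (d0 & Hd0 & Hd).
  set (E := fun r => exists z, spn l z /\ r = - nm (x +: -: z)).
  assert (HE : bound E) by (exists 0; intros r (z & _ & ->); pose proof (bs_norm_ge0 X (x +: -: z)); lra).
  assert (HE2 : exists r, E r) by (exists (- nm (x +: -: z0)); exists z0; split; auto; apply sp_0).
  destruct (completeness E HE HE2) as [m [Hm1 Hm2]].
  set (d := - m).
  assert (Hdd : d0 <= d).
  { unfold d. assert (m <= - d0); [|lra]. apply Hm2. intros r (z & Hz & ->). specialize (Hd z Hz). lra. }
  assert (Hlow : forall z, spn l z -> d <= nm (x +: -: z)).
  { intros z Hz. unfold d. assert (- nm (x +: -: z) <= m); [|lra]. apply Hm1. exists z; auto. }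
  assert (Hz0 : exists z, spn l z /\ nm (x +: -: z) < 2 * d).
  { apply NNPP; intro Hn. assert (m <= - (2 * d)).
    { apply Hm2. intros r (z & Hz & ->). apply Ropp_le_contravar. apply Rnot_lt_le. intro Hlt. apply Hn. exists z; auto. }
    unfold d in *. lra. }
  destruct Hz0 as (z1 & Hz1 & Hn1).
  set (r := nm (x +: -: z1)).
  assert (Hr : d <= r) by (apply Hlow; auto).
  assert (Hr0 : r <> 0) by lra.
  exists (/ r ** (x +: -: z1)). split.
  - rewrite bs_normZ. fold r. rewrite Rabs_pos_eq by (left; apply Rinv_0_lt_compat; lra). field; auto.
  - intros z Hz.
    replace (/ r ** (x +: -: z1) +: -: z) with (/ r ** (x +: -: (z1 +: r ** z))) by veqtac X [x;z1;z].
    rewrite bs_normZ. rewrite Rabs_pos_eq by (left; apply Rinv_0_lt_compat; lra).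
    assert (Hq : d <= nm (x +: -: (z1 +: r ** z))) by (apply Hlow; apply sp_add; auto; apply sp_scal; auto).
    apply (Rmult_le_reg_l r); [lra|]. rewrite <- Rmult_assoc, Rinv_r by auto. assert (Hr2 : r < 2 * d) by (unfold r; lra). lra.
Qed.

Lemma transv_bound l u a z : transv l u -> spn l z -> (Rabs a + nm z) / 5 <= nm (a ** u +: z).
Proof.
  intros [Hu Ht] Hz.
  assert (H1 : Rabs a / 2 <= nm (a ** u +: z)).
  { destruct (Req_dec a 0) as [->|Ha].
    - rewrite Rabs_R0. pose proof (bs_norm_ge0 X (0 ** u +: z)). lra.
    - replace (a ** u +: z) with (a ** (u +: -: ((- / a) ** z))) by veqtac X [u;z].
      rewrite bs_normZ. assert (/ 2 <= nm (u +: -: (- / a ** z))) by (apply Ht; apply sp_scal; auto).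
      pose proof (Rabs_pos a). nra. }
  assert (H2 := norm_rev z (a ** u)). rewrite bs_normZ, Hu, bs_addC in H2.
  lra.
Qed.

End Ban.

Open Scope R_scope.
Import ListNotations.
Open Scope R_scope.

Lemma walk_snoc {V} (adj : V -> V -> Prop) x y z n : walk adj x y n -> adj y z -> walk adj x z (S n).
Proof. intros H; induction H; intros; econstructor; eauto; constructor. Qed.

Lemma walk_app {V} (adj : V -> V -> Prop) x y z n m : walk adj x y n -> walk adj y z m -> walk adj x z (n + m).
Proof. intros H; induction H; intros; simpl; auto. econstructor; eauto. Qed.

Lemma walk_rev {V} (adj : V -> V -> Prop) (Hs : forall x y, adj x y -> adj y x) x y n :
  walk adj x y n -> walk adj y x n.
Proof. intros H; induction H. constructor. eapply walk_snoc; eauto. Qed.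

Lemma walk_map {V W} (adj : V -> V -> Prop) (adj' : W -> W -> Prop) (f : V -> W)
  (Hf : forall x y, adj x y -> adj' (f x) (f y)) x y n : walk adj x y n -> walk adj' (f x) (f y) n.
Proof. intros H; induction H; econstructor; eauto. Qed.

Lemma ex_least (P : nat -> Prop) : (exists n, P n) -> exists n, P n /\ forall m, P m -> (n <= m)%nat.
Proof.
  intros [n Hn]. revert Hn. induction n as [n IH] using (well_founded_induction lt_wf). intro Hn.
  destruct (classic (exists m, (m < n)%nat /\ P m)) as [[m [Hm1 Hm2]]|Hno].
  - apply (IH m Hm1 Hm2).
  - exists n. split; auto. intros m Hm. destruct (Nat.lt_ge_cases m n); auto. exfalso; eauto.
Qed.

Lemma walk_lip (M : MetricSpace) {V} (adj : V -> V -> Prop) (f : V -> M)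
  (Hf : forall x y, adj x y -> ms_dist M (f x) (f y) <= 1) x y n :
  walk adj x y n -> ms_dist M (f x) (f y) <= INR n.
Proof.
  intros H; induction H.
  - rewrite (proj2 (ms_dist_eq0 M _ _) eq_refl). simpl; lra.
  - rewrite S_INR. eapply Rle_trans. apply (ms_dist_tri M _ (f y)). specialize (Hf _ _ H). lra.
Qed.

Lemma gm_walk_le (M : MetricSpace) adj : graph_metric M adj -> forall x y n, walk adj x y n -> ms_dist M x y <= INR n.
Proof.
  intros (_ & _ & H) x y n Hw. destruct (H x y) as (k & -> & _ & Hk). apply le_INR; auto.
Qed.

Lemma gm_adj_le (M : MetricSpace) adj : graph_metric M adj -> forall x y, adj x y -> ms_dist M x y <= 1.
Proof.
  intros Hg x y Ha. replace 1 with (INR 1) by reflexivity. apply (gm_walk_le M adj Hg).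
  econstructor; eauto. constructor.
Qed.

Lemma gm_dist_nat (M : MetricSpace) adj : graph_metric M adj -> forall x y, exists k, ms_dist M x y = INR k /\ walk adj x y k.
Proof. intros (_ & _ & H) x y. destruct (H x y) as (k & ? & ? & _). eauto. Qed.

Section GM.
Variables (V : Type) (adj : V -> V -> Prop).
Hypothesis Hsym : forall x y, adj x y -> adj y x.
Hypothesis Hirr : forall x, ~ adj x x.
Hypothesis Hconn : forall x y, exists n, walk adj x y n.

Definition gd (x y : V) : nat :=
  proj1_sig (constructive_indefinite_description _ (ex_least _ (Hconn x y))).

Lemma gd_spec x y : walk adj x y (gd x y) /\ forall m, walk adj x y m -> (gd x y <= m)%nat.
Proof. unfold gd. destruct (constructive_indefinite_description _ _) as [n Hn]. simpl. auto. Qed.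

Definition gms : MetricSpace.
Proof.
  refine {| ms_car := V; ms_dist := fun x y => INR (gd x y) |}.
  - intros; apply pos_INR.
  - intros x y. split.
    + intro H. replace 0 with (INR 0) in H by reflexivity. apply INR_eq in H.
      destruct (gd_spec x y) as [Hw _]. rewrite H in Hw. inversion Hw; auto.
    + intros ->. destruct (gd_spec y y) as [_ Hm]. specialize (Hm 0%nat (walk_nil _ _)).
      replace (gd y y) with 0%nat by lia. reflexivity.
  - intros x y. f_equal. apply Nat.le_antisymm.
    + apply (proj2 (gd_spec x y)). apply walk_rev; auto. apply gd_spec.
    + apply (proj2 (gd_spec y x)). apply walk_rev; auto. apply gd_spec.
  - intros x y z. rewrite <- plus_INR. apply le_INR. apply (proj2 (gd_spec x z)).
    eapply walk_app; apply gd_spec.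
Defined.

Lemma gms_graph : graph_metric gms adj.
Proof.
  split; [auto|split; [auto|]]. intros x y. exists (gd x y). split; [reflexivity|]. apply gd_spec.
Qed.

End GM.

Open Scope R_scope.
Import ListNotations.

Section Cyc.
Variables (V : Type) (adj : V -> V -> Prop).
Hypothesis Hsym : forall x y, adj x y -> adj y x.

Lemma chain_split l1 x l2 : chain adj (l1 ++ x :: l2) <-> chain adj (l1 ++ [x]) /\ chain adj (x :: l2).
Proof.
  induction l1 as [|a l1 IH]; simpl.
  - destruct l2; simpl; tauto.
  - destruct l1 as [|c l1]; simpl in *.
    + destruct l2; simpl; tauto.
    + rewrite IH. tauto.
Qed.

Lemma chain_tl x l : chain adj (x :: l) -> chain adj l.
Proof. destruct l; simpl; tauto. Qed.

Lemma chain_prefix l1 l2 : chain adj (l1 ++ l2) -> chain adj l1.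
Proof.
  induction l1 as [|a l1 IH]; [simpl; auto|].
  destruct l1 as [|c l1]; [simpl; auto|]. simpl. intros [H1 H2]; split; auto. apply IH. exact H2.
Qed.

Lemma last_in (l : list V) d : l <> [] -> In (last l d) l.
Proof.
  induction l as [|a l IH]; intros H; [congruence|]. destruct l as [|c l].
  - left; auto.
  - right. apply IH. discriminate.
Qed.

Lemma last_indep (l : list V) d d' : l <> [] -> last l d = last l d'.
Proof. induction l as [|a l IH]; intros H; [congruence|]. destruct l; simpl; auto. apply IH; discriminate. Qed.

Lemma chain_snoc_last l y : l <> [] -> chain adj (l ++ [y]) -> adj (last l y) y.
Proof.
  induction l as [|a l IH]; intros H; [congruence|]. destruct l as [|c l]; simpl.
  - tauto.
  - intros [_ H2]. apply IH; auto. discriminate.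
Qed.

Definition cw (l : list V) := match l with [] => False | v :: _ => chain adj (l ++ [v]) end.

Lemma chain_snoc l y : chain adj l -> l <> [] -> adj (last l y) y -> chain adj (l ++ [y]).
Proof.
  induction l as [|a l IH]; intros Hc Hn Ha; [congruence|].
  destruct l as [|c l]; simpl in *; [tauto|].
  destruct Hc as [H1 H2]. split; auto. apply IH; auto. discriminate.
Qed.

Lemma cycle_cw l : is_cycle adj l -> NoDup l /\ (3 <= length l)%nat /\ cw l.
Proof.
  destruct l as [|v r]; simpl; [tauto|]. intros (H1 & H2 & H3 & H4). repeat split; auto.
  change (chain adj ((v :: r) ++ [v])). apply chain_snoc; auto. discriminate.
Qed.

Lemma rotate l v : NoDup l -> cw l -> In v l ->
  exists r, NoDup (v :: r) /\ length (v :: r) = length l /\ chain adj (v :: r ++ [v]) /\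
            forall x, In x l <-> In x (v :: r).
Proof.
  intros Hn Hc Hv. destruct (in_split _ _ Hv) as (pre & post & ->).
  exists (post ++ pre). split; [|split; [|split]].
  - eapply Permutation_NoDup; [|exact Hn].
    change (v :: post ++ pre) with ((v :: post) ++ pre). apply Permutation_app_comm.
  - rewrite !length_app. simpl. rewrite length_app. lia.
  - destruct pre as [|p0 pre'].
    + simpl in *. rewrite app_nil_r. auto.
    + simpl in Hc. rewrite <- app_assoc in Hc. simpl in Hc. change (chain adj ((p0 :: pre') ++ v :: (post ++ [p0]))) in Hc.
      apply chain_split in Hc as [Hc1 Hc2].
      rewrite <- app_assoc. change (chain adj ((v :: post) ++ p0 :: (pre' ++ [v]))).
      apply chain_split. split.
      * change (chain adj (v :: post ++ [p0])). auto.
      * auto.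
  - intros x. rewrite !in_app_iff. simpl. rewrite in_app_iff. tauto.
Qed.

Lemma ends_adj v r : (2 <= length r)%nat -> NoDup (v :: r) -> chain adj (v :: r ++ [v]) ->
  exists h t, adj v h /\ adj v t /\ h <> t /\ In h r /\ In t r.
Proof.
  intros Hl Hn Hc. destruct r as [|h r']; simpl in Hl; [lia|].
  exists h, (last (h :: r') v). simpl in Hc. destruct Hc as [Hvh Hc].
  assert (Ht : adj (last (h :: r') v) v) by (apply chain_snoc_last; [discriminate|auto]).
  split; [auto|split; [auto|split]].
  - assert (Hh : ~ In h r') by (inversion Hn as [|? ? _ Hn']; inversion Hn'; auto).
    intro He. destruct r' as [|c r'']; simpl in Hl; [lia|].
    apply Hh. rewrite He. change (In (last (c :: r'') v) (c :: r'')). apply last_in. discriminate.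
  - split; [left; auto|]. apply last_in. discriminate.
Qed.

Lemma chain_const (side : V -> Prop) a m :
  (forall x y, adj x y -> side x -> ~ side y -> x = a) ->
  chain adj m -> ~ In a m -> forall x y, In x m -> In y m -> (side x <-> side y).
Proof.
  intros Hc. induction m as [|x0 m IH]; intros Hch Ha x y Hx Hy; [destruct Hx|].
  assert (Hall : forall z, In z m -> (side x0 <-> side z)).
  { destruct m as [|x1 m']; [intros z []|]. simpl in Hch. destruct Hch as [H01 Hch].
    assert (E : side x0 <-> side x1).
    { split; intro Hs; apply NNPP; intro Hns.
      - apply Ha. left. eapply Hc; eauto.
      - apply Ha. right; left. eapply Hc; eauto. }
    intros z Hz. rewrite E. apply IH; auto. intro; apply Ha; right; auto. left; auto. }
  destruct Hx as [<-|Hx], Hy as [<-|Hy]; try tauto.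
  - apply Hall; auto.
  - rewrite <- Hall; auto. tauto.
  - rewrite <- (Hall x Hx), <- (Hall y Hy). tauto.
Qed.

Lemma bridge (side : V -> Prop) a b l :
  (forall x y, adj x y -> side x -> ~ side y -> x = a /\ y = b) ->
  side a -> is_cycle adj l -> (exists x, In x l /\ side x) -> (exists y, In y l /\ ~ side y) -> False.
Proof.
  intros Hc Sa Hcyc [x [Hx Sx]] [y [Hy Sy]]. apply cycle_cw in Hcyc as (Hn & Hl & Hcw).
  assert (Hc' : forall x y, adj x y -> side x -> ~ side y -> x = a) by (intros; eapply Hc; eauto).
  assert (Ha : In a l).
  { apply NNPP; intro Ha. destruct l as [|v r]; [destruct Hx|].
    assert (E := chain_const side a ((v :: r) ++ [v]) Hc' Hcw).
    assert (Hna : ~ In a ((v :: r) ++ [v])).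
    { intro Hi. apply Ha. apply in_app_iff in Hi. destruct Hi as [Hi|[<-|[]]]; auto. left; auto. }
    apply Sy. apply (E Hna x y); auto; apply in_app_iff; auto. }
  destruct (rotate l a Hn Hcw Ha) as (r & Hnr & Hlr & Hch & Hin).
  assert (Hr : chain adj r) by (apply chain_tl in Hch; eapply chain_prefix; eauto).
  assert (Hna : ~ In a r) by (inversion Hnr; auto).
  assert (Hyr : In y r) by (apply Hin in Hy; destruct Hy as [<-|]; [tauto|auto]).
  destruct (ends_adj a r ltac:(simpl in Hlr; lia) Hnr Hch) as (h & t & Hh & Ht & Hne & Hhr & Htr).
  assert (Sh : ~ side h) by (intro; apply Sy; apply (chain_const side a r Hc' Hr Hna h y); auto).
  assert (St : ~ side t) by (intro; apply Sy; apply (chain_const side a r Hc' Hr Hna t y); auto).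
  apply Hne. destruct (Hc a h Hh Sa Sh), (Hc a t Ht Sa St). congruence.
Qed.

Lemma max_in (f : V -> nat) l : l <> [] -> exists v, In v l /\ forall y, In y l -> (f y <= f v)%nat.
Proof.
  induction l as [|a l IH]; intros H; [congruence|]. destruct l as [|c l].
  - exists a. split; [left; auto|]. intros y [<-|[]]; auto.
  - destruct IH as (v & Hv & Hm); [discriminate|].
    destruct (Compare_dec.le_ge_dec (f a) (f v)).
    + exists v. split; [right; auto|]. intros y [<-|Hy]; auto.
    + exists a. split; [left; auto|]. intros y [<-|Hy]; auto. specialize (Hm y Hy). lia.
Qed.

Lemma depth_acyc (Q : V -> Prop) (depth : V -> nat) (par : V -> V) l :
  (forall x y, Q x -> Q y -> adj x y -> (y = par x /\ (depth y < depth x)%nat) \/ (x = par y /\ (depth x < depth y)%nat)) ->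
  (forall x, In x l -> Q x) -> is_cycle adj l -> False.
Proof.
  intros Hd HQ Hcyc. assert (Hc := Hcyc). apply cycle_cw in Hc as (Hn & Hl & Hcw).
  destruct (max_in depth l) as (v & Hv & Hm); [destruct l; simpl in Hl; [lia|discriminate]|].
  destruct (rotate l v Hn Hcw Hv) as (r & Hnr & Hlr & Hch & Hin).
  destruct (ends_adj v r ltac:(simpl in Hlr; lia) Hnr Hch) as (h & t & Hh & Ht & Hne & Hhr & Htr).
  assert (Qv : Q v) by auto.
  assert (Qh : Q h) by (apply HQ, Hin; right; auto).
  assert (Qt : Q t) by (apply HQ, Hin; right; auto).
  assert (Mh : (depth h <= depth v)%nat) by (apply Hm, Hin; right; auto).
  assert (Mt : (depth t <= depth v)%nat) by (apply Hm, Hin; right; auto).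
  apply Hne.
  destruct (Hd v h Qv Qh Hh) as [[E1 _]|[_ L1]]; [|lia].
  destruct (Hd v t Qv Qt Ht) as [[E2 _]|[_ L2]]; [|lia].
  congruence.
Qed.

End Cyc.

Open Scope R_scope.
Import ListNotations.
Open Scope R_scope.

Definition bp {A : Type} (x : A) : A := epsilon (inhabits x) (fun _ => True).
Lemma bp_const {A : Type} (x y : A) : bp x = bp y.
Proof. unfold bp. f_equal. apply proof_irrelevance. Qed.

Section Build.
Variable Sp : nat -> MetricSpace.
Variable adjS : forall n, Sp n -> Sp n -> Prop.
Hypothesis HgS : forall n, graph_metric (Sp n) (adjS n).
Variable h : nat -> nat.

Inductive TV : Type :=
| Ar (n t : nat) (H : Nat.leb t (h n) = true)
| Pc (n : nat) (x : Sp n).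

Inductive E : TV -> TV -> Prop :=
| E_sp n H1 H2 : E (Ar n 0 H1) (Ar (S n) 0 H2)
| E_ar n t H1 H2 : E (Ar n t H1) (Ar n (S t) H2)
| E_jn n H x : x = bp x -> E (Ar n (h n) H) (Pc n x)
| E_pc n x y : adjS n x y -> E (Pc n x) (Pc n y).

Definition tadj x y := E x y \/ E y x.

Lemma ar_eq n t H1 H2 : Ar n t H1 = Ar n t H2.
Proof. f_equal. apply UIP_dec. apply bool_dec. Qed.

Lemma pc_inj n x y : Pc n x = Pc n y -> x = y.
Proof. intro H. injection H. intro. apply inj_pair2_eq_dec in H0; auto. apply Nat.eq_dec. Qed.

Lemma E_gen p q : E p q -> match p, q with
  | Pc n x, Pc m y => exists e : n = m, adjS m (eq_rect n Sp x m e) y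
  | Ar n t _, Ar m s _ => (m = S n /\ t = 0%nat /\ s = 0%nat) \/ (m = n /\ s = S t)
  | _, _ => True end.
Proof. intro H; destruct H; simpl; auto. exists eq_refl; simpl; auto. Qed.

Lemma E_pc_inv n x y : E (Pc n x) (Pc n y) -> adjS n x y.
Proof.
  intro H. apply E_gen in H. destruct H as [e He]. rewrite (UIP_refl_nat n e) in He. exact He.
Qed.

Lemma tadj_sym x y : tadj x y -> tadj y x.
Proof. unfold tadj; tauto. Qed.

Lemma E_irr x : ~ E x x.
Proof.
  intro H. destruct x as [n t Ht|n x].
  - apply E_gen in H. lia.
  - apply E_pc_inv in H. destruct (HgS n) as (_ & Hi & _). eapply Hi; eauto.
Qed.

Lemma tadj_irr x : ~ tadj x x.
Proof. intros [H|H]; eapply E_irr; eauto. Qed.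

Lemma leb_of t k : (t <= k)%nat -> Nat.leb t k = true.
Proof. apply Nat.leb_le. Qed.

Lemma arm_walk n k : forall t t' H1 H2, t' = (t + k)%nat -> walk tadj (Ar n t H1) (Ar n t' H2) k.
Proof.
  induction k as [|k IH]; intros t t' H1 H2 Ht.
  - rewrite Nat.add_0_r in Ht. subst t'. rewrite (ar_eq n t H1 H2). constructor.
  - assert (Hs : Nat.leb (S t) (h n) = true).
    { apply leb_of. apply Nat.leb_le in H2. lia. }
    apply walk_cons with (Ar n (S t) Hs). left. constructor. apply IH. lia.
Qed.

Lemma spine_walk k : forall n n' H1 H2, n' = (n + k)%nat -> walk tadj (Ar n 0 H1) (Ar n' 0 H2) k.
Proof.
  induction k as [|k IH]; intros n n' H1 H2 Hn.
  - subst n'. replace (n + 0)%nat with n by lia. rewrite (ar_eq n 0 H1 H2). constructor.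
  - apply walk_cons with (Ar (S n) 0 eq_refl). left. constructor. apply IH. lia.
Qed.

Lemma pc_walk n x y k : walk (adjS n) x y k -> walk tadj (Pc n x) (Pc n y) k.
Proof. apply walk_map. intros a b Hab. left. constructor; auto. Qed.

Definition root : TV := Ar 0 0 eq_refl.

Lemma to_root v : exists k, walk tadj v root k.
Proof.
  assert (HA : forall n t H, exists k, walk tadj (Ar n t H) root k).
  { intros n t H. exists (t + n)%nat. eapply walk_app.
    - apply walk_rev. apply tadj_sym. apply (arm_walk n t 0 t (eq_refl) H). lia.
    - apply walk_rev. apply tadj_sym. apply spine_walk. lia. }
  destruct v as [n t H|n x]; auto.
  destruct (gm_dist_nat (Sp n) (adjS n) (HgS n) x (bp x)) as (k & _ & Hk).
  destruct (HA n (h n) (leb_of _ _ (le_n _))) as [k' Hk'].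
  exists (k + S k')%nat. eapply walk_app. apply pc_walk; eauto.
  econstructor; [|exact Hk']. right. constructor. apply bp_const.
Qed.

Lemma tconn x y : exists k, walk tadj x y k.
Proof.
  destruct (to_root x) as [k1 H1], (to_root y) as [k2 H2]. exists (k1 + k2)%nat.
  eapply walk_app; eauto. apply walk_rev; auto. apply tadj_sym.
Qed.

Definition T : MetricSpace := gms TV tadj tadj_sym tconn.
Definition dT := ms_dist T.

Lemma T_graph : graph_metric T tadj.
Proof. apply gms_graph. apply tadj_irr. Qed.

Lemma dT_walk p q k : walk tadj p q k -> dT p q <= INR k.
Proof. intro Hw. exact (gm_walk_le T tadj T_graph p q k Hw). Qed.

Lemma dT_arm n t t' H H' : dT (Ar n t H) (Ar n t' H') <= Rabs (INR t - INR t').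
Proof.
  destruct (Nat.le_ge_cases t t') as [Hl|Hl].
  - rewrite Rabs_minus_sym, Rabs_pos_eq by (pose proof (le_INR _ _ Hl); lra).
    rewrite <- minus_INR by auto. apply dT_walk. apply arm_walk. lia.
  - rewrite Rabs_pos_eq by (pose proof (le_INR _ _ Hl); lra).
    unfold dT. rewrite ms_dist_sym. fold dT.
    rewrite <- minus_INR by auto. apply dT_walk. apply arm_walk. lia.
Qed.

Lemma dT_spine n m H H' : dT (Ar n 0 H) (Ar m 0 H') <= Rabs (INR n - INR m).
Proof.
  destruct (Nat.le_ge_cases n m) as [Hl|Hl].
  - rewrite Rabs_minus_sym, Rabs_pos_eq by (pose proof (le_INR _ _ Hl); lra).
    rewrite <- minus_INR by auto. apply dT_walk. apply spine_walk. lia.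
  - rewrite Rabs_pos_eq by (pose proof (le_INR _ _ Hl); lra).
    unfold dT. rewrite ms_dist_sym. fold dT.
    rewrite <- minus_INR by auto. apply dT_walk. apply spine_walk. lia.
Qed.

Lemma dT_pc n x y : dT (Pc n x) (Pc n y) <= ms_dist (Sp n) x y.
Proof.
  destruct (gm_dist_nat (Sp n) (adjS n) (HgS n) x y) as (k & -> & Hk).
  apply dT_walk. apply pc_walk; auto.
Qed.

Lemma dT_jn n H x : dT (Ar n (h n) H) (Pc n x) <= 1 + ms_dist (Sp n) (bp x) x.
Proof.
  eapply Rle_trans. apply (ms_dist_tri T _ (Pc n (bp x))).
  apply Rplus_le_compat; [|apply dT_pc].
  replace 1 with (INR 1) by reflexivity. apply dT_walk. econstructor; [|constructor].
  left. constructor. apply bp_const.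
Qed.

Lemma dT_sym p q : dT p q = dT q p.
Proof. apply ms_dist_sym. Qed.

Lemma dT_tri p q r : dT p r <= dT p q + dT q r.
Proof. apply ms_dist_tri. Qed.

End Build.

Open Scope R_scope.
Import ListNotations.
Open Scope R_scope.

Section Emb.
Variable Sp : nat -> MetricSpace.
Variable adjS : forall n, Sp n -> Sp n -> Prop.
Hypothesis HgS : forall n, graph_metric (Sp n) (adjS n).
Variable h : nat -> nat.
Hypothesis Hh : forall n (x : Sp n), ms_dist (Sp n) (bp x) x <= INR (h n).
Variable X : BanachSpace.
Notation "x +: y" := (bs_add X x y) (at level 50, left associativity).
Notation "-: x" := (bs_opp X x) (at level 35).
Notation "a ** x" := (bs_scal X a x) (at level 40).
Notation nm := (bs_norm X).
Variable g : forall n, Sp n -> X.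
Variable C : R.
Hypothesis HC : 0 <= C.
Hypothesis Hg1 : forall n x y, nm (g n x +: -: g n y) <= ms_dist (Sp n) x y.
Hypothesis Hg2 : forall n x y, ms_dist (Sp n) x y <= C * nm (g n x +: -: g n y).
Hypothesis Hgb : forall n x, g n (bp x) = bs_zero X.
Variable e : X.
Variable w : nat -> X.
Variable Y : nat -> list X.
Hypothesis He : nm e = 1.
Hypothesis Hw : forall n, transv X (Y n) (w n).
Hypothesis HYe : forall n, spn X (Y n) e.
Hypothesis HYw : forall n m, (m < n)%nat -> spn X (Y n) (w m).
Hypothesis HYg : forall n m x, (m <= n)%nat -> spn X (Y n) (g m x).

Let TT := T Sp adjS HgS h.
Let dd := dT Sp adjS HgS h.

Definition F (p : TV Sp h) : X :=
  match p with
  | Ar _ _ n t _ => INR n ** e +: INR t ** w n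
  | Pc _ _ n x => INR n ** e +: (INR (h n) + 1) ** w n +: g n x
  end.

Definition K := 5 * C + 300.

Lemma KD D : 0 <= D -> 300 * D <= K * D /\ K * D = 5 * (C * D) + 300 * D.
Proof. intros HD. unfold K. split; nra. Qed.

Lemma gx_le n x : nm (g n x) <= ms_dist (Sp n) (bp x) x.
Proof.
  rewrite ms_dist_sym. eapply Rle_trans; [|apply Hg1].
  rewrite Hgb. replace (g n x +: -: bs_zero X) with (g n x) by veqtac X [g n x]. lra.
Qed.

Lemma r_le n x : ms_dist (Sp n) (bp x) x <= C * nm (g n x).
Proof.
  rewrite ms_dist_sym. eapply Rle_trans; [apply Hg2|].
  rewrite Hgb. replace (g n x +: -: bs_zero X) with (g n x) by veqtac X [g n x]. lra.
Qed.

Lemma nmge p q : 0 <= nm (F q +: -: F p).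
Proof. apply bs_norm_ge0. Qed.

Lemma leb_le' n t : Nat.leb t n = true -> (t <= n)%nat.
Proof. apply Nat.leb_le. Qed.

Lemma dd_A0 n t H : dd (Ar Sp h n t H) (Ar Sp h n 0 eq_refl) <= INR t.
Proof.
  eapply Rle_trans. apply dT_arm. simpl. rewrite Rminus_0_r, Rabs_pos_eq by apply pos_INR. lra.
Qed.

Lemma dd_P0 n x : dd (Pc Sp h n x) (Ar Sp h n 0 eq_refl) <= INR (h n) + 1 + ms_dist (Sp n) (bp x) x.
Proof.
  eapply Rle_trans. apply (dT_tri Sp adjS HgS h _ (Ar Sp h n (h n) (leb_of _ _ (le_n _)))).
  unfold dd. rewrite dT_sym. pose proof (dT_jn Sp adjS HgS h n (leb_of _ _ (le_n _)) x).
  pose proof (dd_A0 n (h n) (leb_of _ _ (le_n _))). unfold dd in *. lra.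
Qed.

Lemma dd_sp n m : (n <= m)%nat -> dd (Ar Sp h n 0 eq_refl) (Ar Sp h m 0 eq_refl) <= INR m - INR n.
Proof.
  intro Hl. eapply Rle_trans. apply dT_spine. pose proof (le_INR _ _ Hl).
  rewrite Rabs_minus_sym, Rabs_pos_eq by lra. lra.
Qed.

Lemma INRlt n m : (n < m)%nat -> INR n + 1 <= INR m.
Proof. intro H. rewrite <- S_INR. apply le_INR. lia. Qed.

Lemma c_AA n t t' H H' : dd (Ar Sp h n t H) (Ar Sp h n t' H') <= K * nm (F (Ar Sp h n t' H') +: -: F (Ar Sp h n t H)).
Proof.
  simpl. replace (INR n ** e +: INR t' ** w n +: -: (INR n ** e +: INR t ** w n)) with
    ((INR t' - INR t) ** w n) by veqtac X [e; w n].
  rewrite bs_normZ. destruct (Hw n) as [Hw1 _]. rewrite Hw1, Rmult_1_r.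
  pose proof (dT_arm Sp adjS HgS h n t t' H H') as A. rewrite Rabs_minus_sym in A.
  destruct (KD _ (Rabs_pos (INR t' - INR t))). unfold dd. pose proof (Rabs_pos (INR t' - INR t)). lra.
Qed.

Lemma c_AP n t H x : dd (Ar Sp h n t H) (Pc Sp h n x) <= K * nm (F (Pc Sp h n x) +: -: F (Ar Sp h n t H)).
Proof.
  simpl. replace (INR n ** e +: (INR (h n) + 1) ** w n +: g n x +: -: (INR n ** e +: INR t ** w n)) with
    ((INR (h n) + 1 - INR t) ** w n +: g n x) by veqtac X [e; w n; g n x].
  set (D := nm ((INR (h n) + 1 - INR t) ** w n +: g n x)).
  assert (HB := transv_bound X (Y n) (w n) (INR (h n) + 1 - INR t) (g n x) (Hw n) (HYg n n x (le_n _))).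
  fold D in HB.
  pose proof (le_INR _ _ (leb_le' _ _ H)).
  rewrite Rabs_pos_eq in HB by lra.
  eapply Rle_trans. apply (dT_tri Sp adjS HgS h _ (Ar Sp h n (h n) (leb_of _ _ (le_n _)))).
  pose proof (dT_arm Sp adjS HgS h n t (h n) H (leb_of _ _ (le_n _))) as A1.
  rewrite Rabs_minus_sym, Rabs_pos_eq in A1 by lra.
  pose proof (dT_jn Sp adjS HgS h n (leb_of _ _ (le_n _)) x) as A2.
  pose proof (r_le n x). pose proof (bs_norm_ge0 X (g n x)).
  assert (C * nm (g n x) <= C * (5 * D)) by (apply Rmult_le_compat_l; lra).
  assert (0 <= D) by apply bs_norm_ge0.
  destruct (KD D); auto. unfold dd in *. lra.
Qed.

Lemma c_PP n x y : dd (Pc Sp h n x) (Pc Sp h n y) <= K * nm (F (Pc Sp h n y) +: -: F (Pc Sp h n x)).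
Proof.
  simpl. replace (INR n ** e +: (INR (h n) + 1) ** w n +: g n y +: -: (INR n ** e +: (INR (h n) + 1) ** w n +: g n x))
    with (g n y +: -: g n x) by veqtac X [e; w n; g n x; g n y].
  eapply Rle_trans. apply dT_pc. eapply Rle_trans. apply Hg2. rewrite norm_sub_sym.
  pose proof (bs_norm_ge0 X (g n y +: -: g n x)).
  destruct (KD (nm (g n y +: -: g n x))); auto. nra.
Qed.

Lemma c_AA_lt n m t s H H' : (n < m)%nat ->
  dd (Ar Sp h n t H) (Ar Sp h m s H') <= K * nm (F (Ar Sp h m s H') +: -: F (Ar Sp h n t H)).
Proof.
  intro Hnm. simpl.
  replace (INR m ** e +: INR s ** w m +: -: (INR n ** e +: INR t ** w n)) with
    (INR s ** w m +: ((- INR t) ** w n +: (INR m - INR n) ** e)) by veqtac X [e; w n; w m].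
  set (z := (- INR t) ** w n +: (INR m - INR n) ** e).
  assert (Hz : spn X (Y m) z) by (apply sp_add; apply sp_scal; auto).
  set (D := nm (INR s ** w m +: z)).
  assert (B1 := transv_bound X (Y m) (w m) (INR s) z (Hw m) Hz). fold D in B1.
  assert (B2 := transv_bound X (Y n) (w n) (- INR t) ((INR m - INR n) ** e) (Hw n) (sp_scal _ _ _ _ (HYe n))).
  fold z in B2. rewrite bs_normZ, He in B2.
  pose proof (INRlt _ _ Hnm). pose proof (pos_INR t). pose proof (pos_INR s).
  rewrite Rabs_Ropp, Rabs_pos_eq in B2 by lra. rewrite (Rabs_pos_eq (INR m - INR n)) in B2 by lra.
  rewrite Rabs_pos_eq in B1 by lra.
  eapply Rle_trans. apply (dT_tri Sp adjS HgS h _ (Ar Sp h n 0 eq_refl)).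
  eapply Rle_trans. apply Rplus_le_compat_l. apply (dT_tri Sp adjS HgS h _ (Ar Sp h m 0 eq_refl)).
  pose proof (dd_A0 n t H). pose proof (dd_A0 m s H'). pose proof (dd_sp n m ltac:(lia)).
  unfold dd in *. rewrite (dT_sym _ _ _ _ (Ar Sp h m 0 eq_refl)).
  assert (0 <= D) by apply bs_norm_ge0. destruct (KD D); auto. lra.
Qed.

Lemma c_AP_lt n m t H x : (n < m)%nat ->
  dd (Ar Sp h n t H) (Pc Sp h m x) <= K * nm (F (Pc Sp h m x) +: -: F (Ar Sp h n t H)).
Proof.
  intro Hnm. simpl.
  replace (INR m ** e +: (INR (h m) + 1) ** w m +: g m x +: -: (INR n ** e +: INR t ** w n)) with
    ((INR (h m) + 1) ** w m +: (((- INR t) ** w n +: (INR m - INR n) ** e) +: g m x))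
    by veqtac X [e; w n; w m; g m x].
  set (z0 := (- INR t) ** w n +: (INR m - INR n) ** e).
  set (z := z0 +: g m x).
  assert (Hz : spn X (Y m) z) by (apply sp_add; auto; apply sp_add; apply sp_scal; auto).
  set (D := nm ((INR (h m) + 1) ** w m +: z)).
  assert (B1 := transv_bound X (Y m) (w m) (INR (h m) + 1) z (Hw m) Hz). fold D in B1.
  assert (B2 := transv_bound X (Y n) (w n) (- INR t) ((INR m - INR n) ** e) (Hw n) (sp_scal _ _ _ _ (HYe n))).
  fold z0 in B2. rewrite bs_normZ, He in B2.
  assert (B3 := norm_rev X z0 (g m x)). fold z in B3.
  pose proof (INRlt _ _ Hnm). pose proof (pos_INR t). pose proof (pos_INR (h m)).
  rewrite Rabs_Ropp, Rabs_pos_eq in B2 by lra. rewrite (Rabs_pos_eq (INR m - INR n)) in B2 by lra.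
  rewrite Rabs_pos_eq in B1 by lra.
  pose proof (gx_le m x). pose proof (Hh m x).
  eapply Rle_trans. apply (dT_tri Sp adjS HgS h _ (Ar Sp h n 0 eq_refl)).
  eapply Rle_trans. apply Rplus_le_compat_l. apply (dT_tri Sp adjS HgS h _ (Ar Sp h m 0 eq_refl)).
  pose proof (dd_A0 n t H). pose proof (dd_P0 m x). pose proof (dd_sp n m ltac:(lia)).
  unfold dd in *. rewrite (dT_sym _ _ _ _ (Ar Sp h m 0 eq_refl)).
  assert (0 <= D) by apply bs_norm_ge0. destruct (KD D); auto. pose proof (bs_norm_ge0 X z). pose proof (bs_norm_ge0 X z0). lra.
Qed.

Lemma c_PA_lt n m x s H : (n < m)%nat ->
  dd (Pc Sp h n x) (Ar Sp h m s H) <= K * nm (F (Ar Sp h m s H) +: -: F (Pc Sp h n x)).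
Proof.
  intro Hnm. simpl.
  replace (INR m ** e +: INR s ** w m +: -: (INR n ** e +: (INR (h n) + 1) ** w n +: g n x)) with
    (INR s ** w m +: ((- (INR (h n) + 1)) ** w n +: ((INR m - INR n) ** e +: (-1) ** g n x)))
    by veqtac X [e; w n; w m; g n x].
  set (z2 := (INR m - INR n) ** e +: (-1) ** g n x).
  set (z := (- (INR (h n) + 1)) ** w n +: z2).
  assert (Hz2 : spn X (Y n) z2) by (apply sp_add; apply sp_scal; auto).
  assert (Hz : spn X (Y m) z) by (apply sp_add; [apply sp_scal; auto|]; apply sp_add; apply sp_scal; auto; apply HYg; lia).
  set (D := nm (INR s ** w m +: z)).
  assert (B1 := transv_bound X (Y m) (w m) (INR s) z (Hw m) Hz). fold D in B1.
  assert (B2 := transv_bound X (Y n) (w n) (- (INR (h n) + 1)) z2 (Hw n) Hz2). fold z in B2.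
  assert (B3 := norm_rev X ((INR m - INR n) ** e) ((-1) ** g n x)). fold z2 in B3.
  rewrite !bs_normZ, He in B3.
  pose proof (INRlt _ _ Hnm). pose proof (pos_INR s). pose proof (pos_INR (h n)).
  rewrite Rabs_Ropp, Rabs_pos_eq in B2 by lra. rewrite (Rabs_pos_eq (INR m - INR n)) in B3 by lra.
  rewrite Rabs_pos_eq in B1 by lra. replace (Rabs (-1)) with 1 in B3 by (rewrite Rabs_left; lra).
  pose proof (gx_le n x). pose proof (Hh n x).
  eapply Rle_trans. apply (dT_tri Sp adjS HgS h _ (Ar Sp h n 0 eq_refl)).
  eapply Rle_trans. apply Rplus_le_compat_l. apply (dT_tri Sp adjS HgS h _ (Ar Sp h m 0 eq_refl)).
  pose proof (dd_P0 n x). pose proof (dd_A0 m s H). pose proof (dd_sp n m ltac:(lia)).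
  unfold dd in *. rewrite (dT_sym _ _ _ _ (Ar Sp h m 0 eq_refl)).
  assert (0 <= D) by apply bs_norm_ge0. destruct (KD D); auto. pose proof (bs_norm_ge0 X z). pose proof (bs_norm_ge0 X z2). lra.
Qed.

Lemma c_PP_lt n m x y : (n < m)%nat ->
  dd (Pc Sp h n x) (Pc Sp h m y) <= K * nm (F (Pc Sp h m y) +: -: F (Pc Sp h n x)).
Proof.
  intro Hnm. simpl.
  replace (INR m ** e +: (INR (h m) + 1) ** w m +: g m y +: -: (INR n ** e +: (INR (h n) + 1) ** w n +: g n x)) with
    ((INR (h m) + 1) ** w m +: (((- (INR (h n) + 1)) ** w n +: ((INR m - INR n) ** e +: (-1) ** g n x)) +: g m y))
    by veqtac X [e; w n; w m; g n x; g m y].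
  set (z2 := (INR m - INR n) ** e +: (-1) ** g n x).
  set (q := (- (INR (h n) + 1)) ** w n +: z2).
  set (z := q +: g m y).
  assert (Hz2 : spn X (Y n) z2) by (apply sp_add; apply sp_scal; auto).
  assert (Hz : spn X (Y m) z).
  { apply sp_add; auto. apply sp_add; [apply sp_scal; auto|]. apply sp_add; apply sp_scal; auto. apply HYg; lia. }
  set (D := nm ((INR (h m) + 1) ** w m +: z)).
  assert (B1 := transv_bound X (Y m) (w m) (INR (h m) + 1) z (Hw m) Hz). fold D in B1.
  assert (B2 := transv_bound X (Y n) (w n) (- (INR (h n) + 1)) z2 (Hw n) Hz2). fold q in B2.
  assert (B3 := norm_rev X ((INR m - INR n) ** e) ((-1) ** g n x)). fold z2 in B3.
  assert (B4 := norm_rev X q (g m y)). fold z in B4.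
  rewrite !bs_normZ, He in B3.
  pose proof (INRlt _ _ Hnm). pose proof (pos_INR (h m)). pose proof (pos_INR (h n)).
  rewrite Rabs_Ropp, Rabs_pos_eq in B2 by lra. rewrite (Rabs_pos_eq (INR m - INR n)) in B3 by lra.
  rewrite Rabs_pos_eq in B1 by lra. replace (Rabs (-1)) with 1 in B3 by (rewrite Rabs_left; lra).
  pose proof (gx_le n x). pose proof (Hh n x). pose proof (gx_le m y). pose proof (Hh m y).
  eapply Rle_trans. apply (dT_tri Sp adjS HgS h _ (Ar Sp h n 0 eq_refl)).
  eapply Rle_trans. apply Rplus_le_compat_l. apply (dT_tri Sp adjS HgS h _ (Ar Sp h m 0 eq_refl)).
  pose proof (dd_P0 n x). pose proof (dd_P0 m y). pose proof (dd_sp n m ltac:(lia)).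
  unfold dd in *. rewrite (dT_sym _ _ _ _ (Ar Sp h m 0 eq_refl)).
  assert (0 <= D) by apply bs_norm_ge0. destruct (KD D); auto.
  pose proof (bs_norm_ge0 X z). pose proof (bs_norm_ge0 X z2). pose proof (bs_norm_ge0 X q). lra.
Qed.

Definition lev (p : TV Sp h) : nat := match p with Ar _ _ n _ _ => n | Pc _ _ n _ => n end.

Lemma c_le p q : (lev p <= lev q)%nat -> dd p q <= K * nm (F q +: -: F p).
Proof.
  destruct p as [n t H|n x], q as [m s H'|m y]; simpl lev; intro Hl;
    (destruct (Nat.eq_dec n m) as [<-|Hne]; [|assert (n < m)%nat by lia]).
  - apply c_AA.
  - apply c_AA_lt; auto.
  - apply c_AP.
  - apply c_AP_lt; auto.
  - unfold dd. rewrite dT_sym. rewrite norm_sub_sym. apply c_AP.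
  - apply c_PA_lt; auto.
  - apply c_PP.
  - apply c_PP_lt; auto.
Qed.

Lemma inv_lip p q : dd p q <= K * bs_dist X (F p) (F q).
Proof.
  unfold bs_dist. destruct (Compare_dec.le_ge_dec (lev p) (lev q)).
  - rewrite norm_sub_sym. apply c_le; auto.
  - unfold dd. rewrite dT_sym. apply c_le; auto.
Qed.

Lemma edge_lip a b : E Sp adjS h a b -> bs_dist X (F a) (F b) <= 1.
Proof.
  intro Hab. unfold bs_dist. destruct Hab as [n H1 H2|n t H1 H2|n H x Hx|n x y Hxy]; unfold F; cbv beta iota.
  - rewrite S_INR. change (INR 0) with 0.
    replace (INR n ** e +: 0 ** w n +: -: ((INR n + 1) ** e +: 0 ** w (S n))) with ((-1) ** e)
      by veqtac X [e; w n; w (S n)].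
    rewrite bs_normZ, He. rewrite Rabs_left by lra. lra.
  - rewrite S_INR.
    replace (INR n ** e +: INR t ** w n +: -: (INR n ** e +: (INR t + 1) ** w n)) with ((-1) ** w n)
      by veqtac X [e; w n].
    rewrite bs_normZ. destruct (Hw n) as [Hw1 _]. rewrite Hw1. rewrite Rabs_left by lra. lra.
  - assert (Hg0 : g n x = bs_zero X) by (rewrite Hx; apply Hgb). rewrite Hg0.
    replace (INR n ** e +: INR (h n) ** w n +: -: (INR n ** e +: (INR (h n) + 1) ** w n +: bs_zero X))
      with ((-1) ** w n) by veqtac X [e; w n].
    rewrite bs_normZ. destruct (Hw n) as [Hw1 _]. rewrite Hw1. rewrite Rabs_left by lra. lra.
  - replace (INR n ** e +: (INR (h n) + 1) ** w n +: g n x +: -: (INR n ** e +: (INR (h n) + 1) ** w n +: g n y))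
      with (g n x +: -: g n y) by veqtac X [e; w n; g n x; g n y].
    eapply Rle_trans. apply Hg1. eapply gm_adj_le; eauto.
Qed.

Lemma lip p q : bs_dist X (F p) (F q) <= dd p q.
Proof.
  destruct (T_graph Sp adjS HgS h) as (_ & _ & Hg).
  destruct (Hg p q) as (k & Hk & Hwk & _). unfold dd, dT. rewrite Hk.
  apply (walk_lip (msX X) (tadj Sp adjS h) F); auto.
  intros a b [Hab|Hab].
  - apply edge_lip; auto.
  - simpl. unfold bs_dist. rewrite norm_sub_sym. apply edge_lip; auto.
Qed.

End Emb.

Open Scope R_scope.
Import ListNotations.
Open Scope R_scope.

Lemma fin_bound (M : MetricSpace) : finite_metric M -> exists k : nat, forall x : M, ms_dist M (bp x) x <= INR k.
Proof.
  intros [l Hl].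
  assert (H : forall l' : list M, exists k : nat, forall x, In x l' -> ms_dist M (bp x) x <= INR k).
  { induction l' as [|a l' IH].
    - exists 0%nat. intros x [].
    - destruct IH as [k1 Hk1]. destruct (INR_unbounded (ms_dist M (bp a) a)) as [k2 Hk2].
      exists (Nat.max k1 k2). intros x [<-|Hx].
      + pose proof (le_INR _ _ (Nat.le_max_r k1 k2)). lra.
      + pose proof (le_INR _ _ (Nat.le_max_l k1 k2)). specialize (Hk1 x Hx). lra. }
  destruct (H l) as [k Hk]. exists k. auto.
Qed.

Section Main.
Variable Sp : nat -> MetricSpace.
Variable adjS : forall n, Sp n -> Sp n -> Prop.
Hypothesis HgS : forall n, graph_metric (Sp n) (adjS n).
Variable h : nat -> nat.
Hypothesis Hh : forall n (x : Sp n), ms_dist (Sp n) (bp x) x <= INR (h n).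

Definition rho (n : nat) (x0 : Sp n) (p : TV Sp h) : Sp n :=
  match p with
  | Pc _ _ m x => match Nat.eq_dec m n with left e => eq_rect m Sp x n e | right _ => bp x0 end
  | _ => bp x0
  end.

Lemma rho_pc n x0 x : rho n x0 (Pc Sp h n x) = x.
Proof. simpl. destruct (Nat.eq_dec n n) as [e|ne]; [|congruence]. rewrite (UIP_refl_nat n e). reflexivity. Qed.

Lemma E_cases p q : E Sp adjS h p q ->
  (exists n H1 H2, p = Ar Sp h n 0 H1 /\ q = Ar Sp h (S n) 0 H2) \/
  (exists n t H1 H2, p = Ar Sp h n t H1 /\ q = Ar Sp h n (S t) H2) \/
  (exists n H x, x = bp x /\ p = Ar Sp h n (h n) H /\ q = Pc Sp h n x) \/
  (exists n x y, adjS n x y /\ p = Pc Sp h n x /\ q = Pc Sp h n y).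
Proof. intro H; destruct H; [left|right; left|right; right; left|right; right; right]; eauto 10. Qed.

Lemma dist0 (M : MetricSpace) (x : M) : ms_dist M x x = 0.
Proof. apply ms_dist_eq0. auto. Qed.

Lemma rho_edge n x0 p q : tadj Sp adjS h p q -> ms_dist (Sp n) (rho n x0 p) (rho n x0 q) <= 1.
Proof.
  assert (Hs : forall p q, E Sp adjS h p q -> ms_dist (Sp n) (rho n x0 p) (rho n x0 q) <= 1).
  { clear p q. intros p q Hpq.
    destruct (E_cases p q Hpq) as [(m & H1 & H2 & -> & ->)|[(m & t & H1 & H2 & -> & ->)|
      [(m & H & x & Hx & -> & ->)|(m & x & y & Hxy & -> & ->)]]]; simpl.
    - rewrite dist0; lra.
    - rewrite dist0; lra.
    - destruct (Nat.eq_dec m n) as [e|ne].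
      + destruct e. simpl. rewrite Hx at 1. rewrite (bp_const x x0), dist0. lra.
      + rewrite dist0; lra.
    - destruct (Nat.eq_dec m n) as [e|ne].
      + destruct e. simpl. eapply gm_adj_le; eauto.
      + rewrite dist0; lra. }
  intros [H|H]; [apply Hs; auto|]. rewrite ms_dist_sym. apply Hs; auto.
Qed.

Lemma dS_le_dT n x y : ms_dist (Sp n) x y <= dT Sp adjS HgS h (Pc Sp h n x) (Pc Sp h n y).
Proof.
  destruct (T_graph Sp adjS HgS h) as (_ & _ & Hg).
  destruct (Hg (Pc Sp h n x) (Pc Sp h n y)) as (k & Hk & Hwk & _). unfold dT. rewrite Hk.
  rewrite <- (rho_pc n x x) at 1. rewrite <- (rho_pc n x y) at 1.
  apply (walk_lip (Sp n) (tadj Sp adjS h) (rho n x)); auto. apply rho_edge.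
Qed.

Lemma build (P : BanachSpace -> Prop) (HP : forall X, finite_dimensional X -> P X) :
  (forall n, finite_metric (Sp n)) -> test_spaces P Sp -> test_space P (T Sp adjS HgS h).
Proof.
  intros Hfin Hts X. split.
  - intro HnP. destruct (proj1 (Hts X) HnP) as [C0 HC0].
    assert (Hfd : ~ finite_dimensional X) by (intro; apply HnP; auto).
    assert (Hd : forall n, exists p : ((Sp n -> X) * R) * R,
      lipschitz_with (Sp n) X (fst (fst p)) (snd (fst p)) /\ inv_lipschitz_with (Sp n) X (fst (fst p)) (snd p)
      /\ snd (fst p) * snd p <= C0).
    { intro n. destruct (HC0 n) as (f & L1 & L2 & H1 & H2 & H3). exists (f, L1, L2). simpl. auto. }
    set (dat := fun n => proj1_sig (constructive_indefinite_description _ (Hd n))).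
    assert (Hdat : forall n, lipschitz_with (Sp n) X (fst (fst (dat n))) (snd (fst (dat n))) /\
       inv_lipschitz_with (Sp n) X (fst (fst (dat n))) (snd (dat n)) /\ snd (fst (dat n)) * snd (dat n) <= C0)
      by (intro n; unfold dat; destruct (constructive_indefinite_description _ _); auto).
    set (f := fun n => fst (fst (dat n))). set (L1 := fun n => snd (fst (dat n))). set (L2 := fun n => snd (dat n)).
    set (g := fun n (x : Sp n) => bs_scal X (/ L1 n) (bs_add X (f n x) (bs_opp X (f n (bp x))))).
    set (C := Rmax C0 0).
    assert (HC : 0 <= C) by apply Rmax_r.
    assert (Hgd : forall n x y, bs_add X (g n x) (bs_opp X (g n y)) =
                     bs_scal X (/ L1 n) (bs_add X (f n x) (bs_opp X (f n y)))).
    { intros n x y. unfold g. rewrite (bp_const y x). veqtac X [f n x; f n y; f n (bp x)]. }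
    assert (Hg1 : forall n x y, bs_norm X (bs_add X (g n x) (bs_opp X (g n y))) <= ms_dist (Sp n) x y).
    { intros n x y. rewrite Hgd, bs_normZ. destruct (Hdat n) as ((HL1 & Hl) & _ & _).
      unfold f, L1 in *. specialize (Hl x y). unfold bs_dist in Hl.
      pose proof (ms_dist_ge0 (Sp n) x y).
      destruct (Req_dec (snd (fst (dat n))) 0) as [E0|E0].
      - rewrite E0, Rinv_0, Rabs_R0. lra.
      - assert (0 < snd (fst (dat n))) by (destruct HL1; [auto|]; exfalso; apply E0; symmetry; auto).
        rewrite Rabs_pos_eq by (left; apply Rinv_0_lt_compat; lra).
        apply (Rmult_le_reg_l (snd (fst (dat n)))); [lra|]. rewrite <- Rmult_assoc, Rinv_r by auto. lra. }
    assert (Hg2 : forall n x y, ms_dist (Sp n) x y <= C * bs_norm X (bs_add X (g n x) (bs_opp X (g n y)))).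
    { intros n x y. rewrite Hgd, bs_normZ. destruct (Hdat n) as ((HL1 & Hl) & (HL2 & Hi) & HLL).
      unfold f, L1, L2 in *. specialize (Hl x y). specialize (Hi x y). unfold bs_dist in Hl, Hi.
      pose proof (ms_dist_ge0 (Sp n) x y). pose proof (bs_norm_ge0 X (bs_add X (fst (fst (dat n)) x) (bs_opp X (fst (fst (dat n)) y)))).
      set (nf := bs_norm X (bs_add X (fst (fst (dat n)) x) (bs_opp X (fst (fst (dat n)) y)))) in *.
      assert (HCm : C0 <= C) by apply Rmax_l.
      destruct (Req_dec (snd (fst (dat n))) 0) as [E0|E0].
      - rewrite E0 in Hl. assert (nf = 0) by lra. rewrite H1 in Hi. rewrite Rmult_0_r in Hi.
        pose proof (Rabs_pos (/ snd (fst (dat n)))). nra.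
      - assert (0 < snd (fst (dat n))) by (destruct HL1; [auto|]; exfalso; apply E0; symmetry; auto).
        rewrite Rabs_pos_eq by (left; apply Rinv_0_lt_compat; lra).
        assert (Hq : nf = snd (fst (dat n)) * (/ snd (fst (dat n)) * nf)) by (field; auto).
        set (ng := / snd (fst (dat n)) * nf) in *.
        assert (0 <= ng) by (unfold ng; apply Rmult_le_pos; [left; apply Rinv_0_lt_compat; lra|lra]).
        rewrite Hq in Hi. assert (snd (dat n) * (snd (fst (dat n)) * ng) <= C0 * ng) by nra. nra. }
    assert (Hgb : forall n x, g n (bp x) = bs_zero X).
    { intros n x. unfold g. rewrite (bp_const (bp x) x). rewrite bs_addN. apply scal0r. }
    assert (Hrz : forall l : list X, { u | transv X l u }) by (intro l; apply constructive_indefinite_description, riesz; auto).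
    set (rz := fun l => proj1_sig (Hrz l)).
    assert (Hrzs : forall l, transv X l (rz l)) by (intro l; unfold rz; destruct (Hrz l); auto).
    assert (Hen : forall n, { l : list (Sp n) | forall x, In x l }) by (intro n; apply constructive_indefinite_description, Hfin).
    set (cloud := fun n => map (g n) (proj1_sig (Hen n))).
    assert (Hcl : forall n x, In (g n x) (cloud n)) by (intros n x; unfold cloud; apply in_map; destruct (Hen n); auto).
    set (e := rz []).
    set (Y := fix Y n := match n with O => e :: cloud O | S k => rz (Y k) :: cloud (S k) ++ Y k end).
    set (w := fun n => rz (Y n)).
    assert (HYmono : forall m n, (m <= n)%nat -> incl (Y m) (Y n)).
    { intros m n Hmn. induction Hmn; [apply incl_refl|]. eapply incl_tran; eauto.
      simpl. intros a Ha. right. apply in_app_iff. right. auto. }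
    assert (He : bs_norm X e = 1) by (destruct (Hrzs []); auto).
    assert (Hw : forall n, transv X (Y n) (w n)) by (intro n; apply Hrzs).
    assert (HYe : forall n, spn X (Y n) e).
    { intro n. apply sp_in. apply (HYmono 0%nat n ltac:(lia)). simpl. left; auto. }
    assert (HYw : forall n m, (m < n)%nat -> spn X (Y n) (w m)).
    { intros n m Hmn. apply sp_in. apply (HYmono (S m) n Hmn). simpl. left; auto. }
    assert (HYg : forall n m x, (m <= n)%nat -> spn X (Y n) (g m x)).
    { intros n m x Hmn. apply sp_in. apply (HYmono m n Hmn). destruct m; simpl.
      - right. auto.
      - right. apply in_app_iff. left. auto. }
    exists (K C). intros _. exists (F Sp h X g e w). exists 1, (K C). split; [|split].
    + split; [lra|]. intros p q. rewrite Rmult_1_l.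
      apply (lip Sp adjS HgS h X g Hg1 Hgb e w Y He Hw).
    + split; [unfold K; lra|]. intros p q.
      apply (inv_lip Sp adjS HgS h Hh X g C HC Hg1 Hg2 Hgb e w Y He Hw HYe HYw HYg).
    + lra.
  - intros [Cc HCc]. apply (proj2 (Hts X)). destruct (HCc tt) as (f & L1 & L2 & (HL1 & Hl) & (HL2 & Hi) & HLL).
    exists Cc. intro n. exists (fun x => f (Pc Sp h n x)). exists L1, L2. split; [|split; auto].
    + split; auto. intros x y. eapply Rle_trans. apply Hl. apply Rmult_le_compat_l; auto. apply dT_pc.
    + split; auto. intros x y. eapply Rle_trans. apply dS_le_dT. apply Hi.
Qed.

End Main.

Close Scope R_scope.
Import ListNotations.

Section Tree.
Variable Sp : nat -> MetricSpace.
Variable adjS : forall n, Sp n -> Sp n -> Prop.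
Hypothesis HgS : forall n, graph_metric (Sp n) (adjS n).
Variable h : nat -> nat.

Notation tadj' := (tadj Sp adjS h).

Lemma leb_S t k : Nat.leb (S t) k = true -> Nat.leb t k = true.
Proof. intro H. apply Nat.leb_le in H. apply Nat.leb_le. lia. Qed.

Definition par (p : TV Sp h) : TV Sp h :=
  match p with
  | Ar _ _ n t H =>
    (match t as t' return (Nat.leb t' (h n) = true -> TV Sp h) with
     | S t0 => fun H0 => Ar Sp h n t0 (leb_S _ _ H0)
     | O => fun _ => match n with S n0 => Ar Sp h n0 0 eq_refl | O => Ar Sp h 0 0 eq_refl end
     end) H
  | _ => p
  end.

Definition depth (p : TV Sp h) : nat :=
  match p with Ar _ _ n t _ => (n + t)%nat | Pc _ _ _ _ => 0%nat end.

Lemma Ar_inj n t H m s H' : Ar Sp h n t H = Ar Sp h m s H' -> n = m /\ t = s.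
Proof. intro E. injection E; auto. Qed.

Lemma Pc_inj n x m y : Pc Sp h n x = Pc Sp h m y -> n = m.
Proof. intro E. injection E; auto. Qed.

Lemma adjS_sym n x y : adjS n x y -> adjS n y x.
Proof. destruct (HgS n) as (Hs & _). auto. Qed.

Lemma tadj_pc n x y : tadj' (Pc Sp h n x) (Pc Sp h n y) -> adjS n x y.
Proof.
  intros [H|H]; apply E_pc_inv in H; auto. apply adjS_sym; auto.
Qed.

Lemma chain_map n l : chain tadj' (map (Pc Sp h n) l) -> chain (adjS n) l.
Proof.
  induction l as [|a l IH]; simpl; auto. destruct l as [|b l]; simpl; auto.
  intros [H1 H2]. split; [apply tadj_pc; auto|]. apply IH. exact H2.
Qed.

Lemma last_map' {A B} (f : A -> B) (l : list A) d : last (map f l) (f d) = f (last l d).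
Proof. induction l as [|a l IH]; simpl; auto. destruct l; simpl in *; auto. Qed.

Lemma cyc_map n l : is_cycle tadj' (map (Pc Sp h n) l) -> is_cycle (adjS n) l.
Proof.
  destruct l as [|v r]; [simpl; tauto|]. intro H.
  cbv beta iota delta [is_cycle] in H. cbv beta iota delta [is_cycle].
  destruct H as (H1 & H2 & H3 & H4). split; [|split; [|split]].
  - apply (NoDup_map_inv (Pc Sp h n)). exact H1.
  - rewrite length_map in H2. exact H2.
  - apply chain_map. exact H3.
  - apply tadj_pc. rewrite last_map' in H4. exact H4.
Qed.

Lemma list_of_map {A B} (f : A -> B) (l : list B) : (forall y, In y l -> exists z, y = f z) -> exists l', l = map f l'.
Proof.
  induction l as [|a l IH]; intros H.
  - exists []; auto.
  - destruct (H a (or_introl eq_refl)) as [z ->]. destruct IH as [l' ->].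
    + intros y Hy. apply H. right; auto.
    + exists (z :: l'). auto.
Qed.

Lemma tree_acyclic : (forall n, acyclic (adjS n)) -> acyclic tadj'.
Proof.
  intros Hacy l Hc.
  destruct (classic (exists n x, In (Pc Sp h n x) l)) as [(n & x & Hx)|Hno].
  - set (side := fun p : TV Sp h => exists y, p = Pc Sp h n y).
    set (b := Ar Sp h n (h n) (leb_of _ _ (le_n _))).
    assert (Hcross : forall p q, tadj' p q -> side p -> ~ side q -> p = Pc Sp h n (bp x) /\ q = b).
    { intros p q Hpq [y ->] Hq. destruct Hpq as [Hpq|Hpq]; destruct (E_cases Sp adjS h _ _ Hpq) as
        [(m & H1 & H2 & E1 & E2)|[(m & t & H1 & H2 & E1 & E2)|[(m & H & x1 & Hx1 & E1 & E2)|(m & x1 & y1 & Hxy & E1 & E2)]]];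
        try discriminate.
      - assert (n = m) by (eapply Pc_inj; eauto). subst m. exfalso; apply Hq. exists y1; auto.
      - subst q. assert (n = m) by (eapply Pc_inj; eauto). subst m.
        apply pc_inj in E2. subst x1. split.
        + rewrite Hx1 at 1. rewrite (bp_const y x). auto.
        + apply ar_eq.
      - assert (n = m) by (symmetry; eapply Pc_inj; eauto). subst m. exfalso; apply Hq. exists x1; auto. }
    assert (Hall : forall y, In y l -> side y).
    { intros y Hy. apply NNPP; intro Hs.
      apply (bridge (TV Sp h) tadj' (tadj_sym Sp adjS h) side (Pc Sp h n (bp x)) b l Hcross); eauto.
      - exists (bp x); auto.
      - exists (Pc Sp h n x); split; auto. exists x; auto. }
    destruct (list_of_map (Pc Sp h n) l Hall) as [l' ->].
    apply (Hacy n l'). apply cyc_map. auto.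
  - apply (depth_acyc (TV Sp h) tadj' (tadj_sym Sp adjS h) (fun p => exists n t H, p = Ar Sp h n t H) depth par l).
    + intros p q (n & t & H & ->) (m & s & H' & ->) Hpq.
      destruct Hpq as [Hpq|Hpq]; destruct (E_cases Sp adjS h _ _ Hpq) as
        [(k & H1 & H2 & E1 & E2)|[(k & u & H1 & H2 & E1 & E2)|[(k & H0 & x1 & Hx1 & E1 & E2)|(k & x1 & y1 & Hxy & E1 & E2)]]];
        try discriminate.
      * apply Ar_inj in E1 as [? ?]; subst. apply Ar_inj in E2 as [? ?]; subst. right. split; [simpl; apply ar_eq|simpl; lia].
      * apply Ar_inj in E1 as [? ?]; subst. apply Ar_inj in E2 as [? ?]; subst. right. split; [simpl; apply ar_eq|simpl; lia].
      * apply Ar_inj in E1 as [? ?]; subst. apply Ar_inj in E2 as [? ?]; subst. left. split; [simpl; apply ar_eq|simpl; lia].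
      * apply Ar_inj in E1 as [? ?]; subst. apply Ar_inj in E2 as [? ?]; subst. left. split; [simpl; apply ar_eq|simpl; lia].
    + intros p Hp. destruct p as [n t H|n x]; [eauto|]. exfalso. apply Hno. eauto.
    + auto.
Qed.

Lemma opt_ar n t : exists l1 : list (TV Sp h), (length l1 <= 1)%nat /\ forall H, In (Ar Sp h n t H) l1.
Proof.
  destruct (bool_dec (Nat.leb t (h n)) true) as [Eb|Eb].
  - exists [Ar Sp h n t Eb]. split; [simpl; lia|]. intros H. left. apply ar_eq.
  - exists []. split; [simpl; lia|]. intros H. congruence.
Qed.

Lemma opt_pc n : exists l1 : list (TV Sp h), (length l1 <= 1)%nat /\ forall x, x = bp x -> In (Pc Sp h n x) l1.
Proof.
  destruct (classic (exists x0 : Sp n, True)) as [[x0 _]|Hno].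
  - exists [Pc Sp h n (bp x0)]. split; [simpl; lia|]. intros x Hx. left. rewrite Hx. f_equal. apply bp_const.
  - exists []. split; [simpl; lia|]. intros x _. exfalso; apply Hno; eauto.
Qed.

Lemma tree_degree D : (forall n, degree_le (adjS n) D) -> degree_le tadj' (D + 5).
Proof.
  intros HD v. destruct v as [n t H|n z].
  - destruct (opt_ar n (S t)) as (o2 & L2 & H2).
    destruct (opt_pc n) as (o3 & L3 & H3).
    destruct (opt_ar n (t - 1)) as (o5 & L5 & H5).
    exists ([Ar Sp h (S n) 0 eq_refl] ++ o2 ++ o3 ++ [Ar Sp h (n - 1) 0 eq_refl] ++ o5).
    split; [rewrite !length_app; simpl; lia|].
    intros y Hy. rewrite !in_app_iff.
    destruct Hy as [Hy|Hy]; destruct (E_cases Sp adjS h _ _ Hy) as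
        [(k & H1 & H2' & E1 & E2)|[(k & u & H1 & H2' & E1 & E2)|[(k & H0 & x1 & Hx1 & E1 & E2)|(k & x1 & y1 & Hxy & E1 & E2)]]];
        try discriminate.
    + apply Ar_inj in E1 as [? ?]; subst. try subst y. left. left. apply ar_eq.
    + apply Ar_inj in E1 as [? ?]; subst. try subst y. right; left. apply H2.
    + apply Ar_inj in E1 as [? ?]; subst. try subst y. right; right; left. apply H3; auto.
    + try subst y. apply Ar_inj in E2 as [? ?]; subst. right; right; right; left. left.
      replace (S k - 1)%nat with k by lia. apply ar_eq.
    + try subst y. apply Ar_inj in E2 as [? ?]; subst. right; right; right; right.
      replace (S u - 1)%nat with u in H5 by lia. apply H5.
  - destruct (HD n z) as (lz & Lz & Hlz).
    exists (map (Pc Sp h n) lz ++ [Ar Sp h n (h n) (leb_of _ _ (le_n _))]).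
    split; [rewrite length_app, length_map; simpl; lia|].
    intros y Hy. rewrite in_app_iff.
    destruct Hy as [Hy|Hy]; destruct (E_cases Sp adjS h _ _ Hy) as
        [(k & H1 & H2' & E1 & E2)|[(k & u & H1 & H2' & E1 & E2)|[(k & H0 & x1 & Hx1 & E1 & E2)|(k & x1 & y1 & Hxy & E1 & E2)]]];
        try discriminate.
    + assert (n = k) by (eapply Pc_inj; eauto). subst k. apply pc_inj in E1. subst x1; try subst y.
      left. apply in_map. apply Hlz. auto.
    + try subst y. assert (n = k) by (eapply Pc_inj; eauto). subst k. right. left. apply ar_eq.
    + try subst y. assert (n = k) by (eapply Pc_inj; eauto). subst k. apply pc_inj in E2. subst y1.
      left. apply in_map. apply Hlz. apply adjS_sym. auto.
Qed.

End Tree.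

Open Scope R_scope.

Theorem mainTheorem15 :
  forall (P : BanachSpace -> Prop),
    (forall X : BanachSpace, finite_dimensional X -> P X) ->
  forall (S : nat -> MetricSpace),
    (forall n, finite_metric (S n)) ->
    test_spaces P S ->
    (* (i) connected unweighted graphs *)
    ((forall n, exists adj, graph_metric (S n) adj) ->
       exists (T : MetricSpace) (adj : T -> T -> Prop),
         graph_metric T adj /\ test_space P T)
    /\
    (* (ii) trees *)
    ((forall n, exists adj, tree_metric (S n) adj) ->
       exists (T : MetricSpace) (adj : T -> T -> Prop),
         tree_metric T adj /\ test_space P T)
    /\
    (* (iii) connected graphs with uniformly bounded degrees *)
    ((exists D : nat, forall n, exists adj, graph_metric (S n) adj /\ degree_le adj D) ->
       exists (T : MetricSpace) (adj : T -> T -> Prop) (D' : nat),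
         graph_metric T adj /\ degree_le adj D' /\ test_space P T).
Proof.
  intros P HP S Hfin Hts.
  assert (Hhx : forall n, {k : nat | forall x : S n, ms_dist (S n) (bp x) x <= INR k})
    by (intro n; apply constructive_indefinite_description, fin_bound, Hfin).
  set (h := fun n => proj1_sig (Hhx n)).
  assert (Hh : forall n (x : S n), ms_dist (S n) (bp x) x <= INR (h n))
    by (intros n x; unfold h; destruct (Hhx n); auto).
  split; [|split].
  - intro Had.
    set (adjS := fun n => proj1_sig (constructive_indefinite_description _ (Had n))).
    assert (HgS : forall n, graph_metric (S n) (adjS n))
      by (intro n; unfold adjS; destruct (constructive_indefinite_description _ _); auto).
    exists (T S adjS HgS h), (tadj S adjS h). split.
    + apply T_graph.
    + apply build; auto.
  - intro Had.
    set (adjS := fun n => proj1_sig (constructive_indefinite_description _ (Had n))).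
    assert (Htr : forall n, tree_metric (S n) (adjS n))
      by (intro n; unfold adjS; destruct (constructive_indefinite_description _ _); auto).
    assert (HgS : forall n, graph_metric (S n) (adjS n)) by (intro n; apply Htr).
    exists (T S adjS HgS h), (tadj S adjS h). split; [split|].
    + apply T_graph.
    + apply (tree_acyclic S adjS HgS h). intro n; apply Htr.
    + apply build; auto.
  - intros [D Had].
    set (adjS := fun n => proj1_sig (constructive_indefinite_description _ (Had n))).
    assert (Hb : forall n, graph_metric (S n) (adjS n) /\ degree_le (adjS n) D)
      by (intro n; unfold adjS; destruct (constructive_indefinite_description _ _); auto).
    assert (HgS : forall n, graph_metric (S n) (adjS n)) by (intro n; apply Hb).
    exists (T S adjS HgS h), (tadj S adjS h), (D + 5)%nat. split; [|split].
    + apply T_graph.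
    + apply (tree_degree S adjS HgS h D). intro n; apply Hb.
    + apply build; auto.
Qed.
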